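(* Let $S$ be a finite state space, $P$ a row-stochastic $|S|\times|S|$ matrix (the transition matrix induced by a target policy $\pi$), $\beta\in(0,1)$, $d_\mu$ a probability vector on $S$ (the stationary distribution of a behavior policy $\mu$), and $f^\top=d_\mu^\top(I-\beta P)^{-1}$, assumed to satisfy $f(s)>0$ for all $s$. Let $\kappa=\min_s \frac{d_\mu(s)}{f(s)}$. Then $0\le\kappa\le 1-\beta$. Moreover, $\kappa=0$ when there is a state visited by the target policy but not by the behavior policy (i.e. a state $s$ with $d_\mu(s)=0$ and $[d_\mu^\top P^t](s)>0$ for some $t\ge 0$), and $\kappa=1-\beta$ when the two policies are identical (so that $d_\mu$ equals the stationary distribution $d_\pi$ of $P$, i.e. $d_\mu^\top P=d_\mu^\top$).
   Context: $d_\pi$ denotes the stationary distribution over states induced by the target policy, i.e. a probability vector with $d_\pi^\top P=d_\pi^\top$. *)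

(* Defs.v *)
(* State space S = 'I_n.+1 (finite, nonempty so that the min exists). *)
From HB Require Import structures.
From mathcomp Require Import all_boot all_order all_algebra.
Set Implicit Arguments. Unset Strict Implicit. Unset Printing Implicit Defensive.
Import Order.TTheory GRing.Theory Num.Theory.
Local Open Scope ring_scope.

Definition row_stochastic (R : numDomainType) (n : nat) (P : 'M[R]_n) : Prop :=
  (forall i j, 0 <= P i j) /\ (forall i, \sum_j P i j = 1).

Definition prob_vec (R : numDomainType) (n : nat) (d : 'rV[R]_n) : Prop :=
  (forall s, 0 <= d 0 s) /\ \sum_s d 0 s = 1.

Definition fvec (R : fieldType) (n : nat) (P : 'M[R]_n.+1) (beta : R)
  (d : 'rV[R]_n.+1) : 'rV[R]_n.+1 :=
  d *m invmx (1%:M - beta *: P).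

Definition kappa (R : realFieldType) (n : nat) (P : 'M[R]_n.+1) (beta : R)
  (d : 'rV[R]_n.+1) : R :=
  let f := fvec P beta d in
  \big[Num.min/ (d 0 ord0 / f 0 ord0)]_(s : 'I_n.+1) (d 0 s / f 0 s).

(* Main.v *)
Require Import Defs.
From HB Require Import structures.
From mathcomp Require Import all_boot all_order all_algebra.
Import Order.TTheory GRing.Theory Num.Theory.
Local Open Scope ring_scope.

Lemma unitA (R : realFieldType) (n : nat) (P : 'M[R]_n.+1) (beta : R)
  (HP : row_stochastic P) (Hbeta0 : 0 < beta) (Hbeta1 : beta < 1) :
  (1%:M - beta *: P) \in unitmx.
Proof.
rewrite -row_free_unit; apply: inj_row_free => v Hv.
case: HP => HP0 HP1.
have Ej : forall j, v 0 j = beta * \sum_i v 0 i * P i j.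
  move=> j; have := congr1 (fun M : 'rV_n.+1 => M 0 j) Hv.
  rewrite mulmxBr mulmx1 -scalemxAr !mxE => /eqP; rewrite subr_eq0 => /eqP ->.
  by [] || rewrite !mxE.
set S := \sum_j `|v 0 j|.
have HS : S <= beta * S.
  rewrite /S.
  apply: (@le_trans _ _ (\sum_j beta * \sum_i `|v 0 i| * P i j)).
    apply: ler_sum => j _; rewrite Ej normrM ger0_norm ?(ltW Hbeta0) //.
    rewrite ler_wpM2l ?(ltW Hbeta0) //.
    apply: (le_trans (ler_norm_sum _ _ _)); apply: ler_sum => i _.
    by rewrite normrM (ger0_norm (HP0 i j)).
  rewrite -mulr_sumr ler_wpM2l ?(ltW Hbeta0) // exchange_big /=.
  apply: ler_sum => i _; rewrite -mulr_sumr HP1 mulr1 //.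
have S0 : S = 0.
  have S0' : 0 <= S by apply: sumr_ge0 => j _; exact: normr_ge0.
  apply/eqP; rewrite eq_le S0' andbT.
  have : (1 - beta) * S <= 0 by rewrite mulrBl mul1r subr_le0.
  by rewrite pmulr_rle0 // subr_gt0.
apply/rowP => j; rewrite mxE; apply/eqP; rewrite -normr_eq0; apply/eqP.
move/eqP: S0; rewrite /S psumr_eq0 => [/allP H|i _]; last exact: normr_ge0.
by apply/eqP; apply: (implyP (H j (mem_index_enum _))).
Qed.

Theorem lemma1 (R : realFieldType) (n : nat) (P : 'M[R]_n.+1) (beta : R)
  (d_mu : 'rV[R]_n.+1)
  (HP : row_stochastic P) (Hbeta0 : 0 < beta) (Hbeta1 : beta < 1)
  (Hd : prob_vec d_mu)
  (Hf : forall s, 0 < (fvec P beta d_mu) 0 s) :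
  0 <= kappa P beta d_mu /\ kappa P beta d_mu <= 1 - beta /\
  ((exists (s : 'I_n.+1) (t : nat), d_mu 0 s = 0 /\ 0 < (d_mu *m P ^+ t) 0 s) ->
     kappa P beta d_mu = 0) /\
  (d_mu *m P = d_mu -> kappa P beta d_mu = 1 - beta).
Proof.
have HU := @unitA R n P beta HP Hbeta0 Hbeta1.
case: (HP) => HP0 HP1; case: Hd => Hd0 Hd1.
set f := fvec P beta d_mu.
have Hfd : f *m (1%:M - beta *: P) = d_mu by rewrite /f /fvec mulmxKV.
have Hk0 : 0 <= kappa P beta d_mu.
  rewrite /kappa; apply: le_bigmin => [|i _]; rewrite divr_ge0 // ltW //.
have Hkle : forall s, kappa P beta d_mu <= d_mu 0 s / f 0 s.
  by move=> s; rewrite /kappa; apply: bigmin_le.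
split => //; split; [|split].
- rewrite leNgt; apply/negP => Hlt.
  have Hs : forall s, (1 - beta) * f 0 s < d_mu 0 s.
    move=> s; have := lt_le_trans Hlt (Hkle s).
    by rewrite ltr_pdivlMr.
  have Hsumf : (1 - beta) * \sum_s f 0 s = 1.
    transitivity (\sum_s d_mu 0 s); last exact: Hd1.
    rewrite mulrBl mul1r.
    have Ej : forall j, d_mu 0 j = f 0 j - beta * \sum_i f 0 i * P i j.
      move=> j; rewrite -Hfd mulmxBr mulmx1 -scalemxAr !mxE; congr (_ - _).
    rewrite (eq_bigr _ (fun j _ => Ej j)) sumrB -mulr_sumr exchange_big /=.
    by congr (_ - beta * _); apply: eq_bigr => i _; rewrite -mulr_sumr HP1 mulr1.
  have : \sum_s (1 - beta) * f 0 s < \sum_s d_mu 0 s.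
    by apply: ltr_sum => //; apply/hasP; exists ord0; rewrite ?mem_index_enum.
  by rewrite -mulr_sumr Hsumf Hd1 ltxx.
- case=> s [t [Hs _]]; apply/eqP; rewrite eq_le Hk0 andbT.
  by have := Hkle s; rewrite Hs mul0r.
- move=> Hst.
  have E : d_mu *m (1%:M - beta *: P) = (1 - beta) *: d_mu.
    by rewrite mulmxBr mulmx1 -scalemxAr Hst scalerBl scale1r.
  have E2 : d_mu = (1 - beta) *: f by rewrite /f /fvec scalemxAl -E mulmxK.
  have hb : 1 - beta != 0 by rewrite subr_eq0 eq_sym lt_eqF.
  have Hterm : forall s, d_mu 0 s / f 0 s = 1 - beta.
    move=> s; have fs := Hf s; rewrite -/f in fs.
    rewrite E2 mxE mulfK //; exact: lt0r_neq0.
  have Hkle2 : 1 - beta <= kappa P beta d_mu.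
    rewrite /kappa; apply: le_bigmin => [|i _]; by rewrite -/f Hterm.
  by apply/eqP; rewrite eq_le Hkle2 andbT -(Hterm ord0) Hkle.
Qed.
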